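(* Let $n\ge 3$ and let $o,o'\in N$ differ at most in the first component. Then $\mathcal{I}^{\langle 1\rangle}:x_o=\mathcal{I}^{\langle 1\rangle}:x_{o'}$.
   Context: Fix positive integers $n, r_1,\dots,r_n$, let $N=[r_1]\times\cdots\times[r_n]$, and let $R$ be the polynomial ring over a field in the variables $x_a$, $a\in N$. For $a,b\in N$, ${\rm s}(1,a,b)\in N$ has first component $b_1$ and other components equal to those of $a$. Let $d(a,b)=\#\{j: a_j\neq b_j\}$ and $f_{1,a,b}=x_ax_b-x_{{\rm s}(1,a,b)}x_{{\rm s}(1,b,a)}$. Let $\mathcal{I}^{\langle 1\rangle}=(f_{1,a,b}: a,b\in N,\ d(a,b)=2)$. For an ideal $I$ and element $x$, $I:x=\{f\in R: fx\in I\}$. *)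

(* Defs.v *)
From HB Require Import structures.
From mathcomp Require Import all_boot all_algebra.
From mathcomp Require Import mpoly.
Set Implicit Arguments. Unset Strict Implicit. Unset Printing Implicit Defensive.
Import GRing.Theory.
Local Open Scope ring_scope.

(* The index set N = [r_1] x ... x [r_n]; components are 0-based: 'I_(r j). *)
Definition Nidx (n : nat) (r : 'I_n -> nat) : finType :=
  {dffun forall j : 'I_n, 'I_(r j)}.

Definition swp n (r : 'I_n -> nat) (j1 : 'I_n) (a b : Nidx r) : Nidx r :=
  [ffun j => if j == j1 then b j else a j].

Definition dist n (r : 'I_n -> nat) (a b : Nidx r) : nat :=
  #|[set j | a j != b j]|.

(* The polynomial ring R = F[x_a : a in N]: variables indexed by N via enum_rank. *)
Definition PR (F : fieldType) n (r : 'I_n -> nat) := {mpoly F[#|Nidx r|]}.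

Definition xv (F : fieldType) n (r : 'I_n -> nat) (a : Nidx r) : PR F r :=
  'X_(enum_rank a).

Definition fgen (F : fieldType) n (r : 'I_n -> nat) (j1 : 'I_n) (a b : Nidx r)
  : PR F r :=
  xv F a * xv F b - xv F (swp j1 a b) * xv F (swp j1 b a).

Definition in_ideal_gen (R : comPzRingType) (G : R -> Prop) (f : R) : Prop :=
  exists s : seq (R * R), (forall p, p \in s -> G p.2) /\
    f = \sum_(p <- s) p.1 * p.2.

Definition gens_I (F : fieldType) n (r : 'I_n -> nat) (j1 : 'I_n)
  (g : PR F r) : Prop :=
  exists a b : Nidx r, dist a b = 2%N /\ g = fgen F j1 a b.

Definition in_I (F : fieldType) n (r : 'I_n -> nat) (j1 : 'I_n) (f : PR F r)
  : Prop := in_ideal_gen (@gens_I F n r j1) f.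

Definition in_colon (F : fieldType) n (r : 'I_n -> nat) (j1 : 'I_n)
  (x f : PR F r) : Prop := @in_I F n r j1 (f * x).

(* Main.v *)
Require Import Defs.
From HB Require Import structures.
From mathcomp Require Import all_boot all_algebra.
From mathcomp Require Import mpoly.
From mathcomp Require Import zify.
From Stdlib Require Import Classical ClassicalEpsilon.
Set Implicit Arguments. Unset Strict Implicit. Unset Printing Implicit Defensive.

Definition dl n (r : 'I_n -> nat) (a : Nidx r) : 'X_{1..#|Nidx r|} := U_(enum_rank a)%MM.

Definition samecol n (r : 'I_n -> nat) (i1 : 'I_n) (a b : Nidx r) :=
  forall j, j != i1 -> a j = b j.

Lemma swpE n (r : 'I_n -> nat) i1 (a b : Nidx r) j :
  swp i1 a b j = if j == i1 then b j else a j.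
Proof. by rewrite /swp ffunE. Qed.

Lemma swp_swp_l n (r : 'I_n -> nat) i1 (a b c : Nidx r) : swp i1 (swp i1 a b) c = swp i1 a c.
Proof. apply/ffunP=> j; rewrite !swpE; by case: (j == i1). Qed.
Lemma swp_swp_r n (r : 'I_n -> nat) i1 (a b c : Nidx r) : swp i1 a (swp i1 b c) = swp i1 a c.
Proof. apply/ffunP=> j; rewrite !swpE; by case: eqP => // ->. Qed.
Lemma swp_id n (r : 'I_n -> nat) i1 (a : Nidx r) : swp i1 a a = a.
Proof. apply/ffunP=> j; rewrite !swpE; by case: eqP => // ->. Qed.
Lemma swp_same n (r : 'I_n -> nat) i1 (a b : Nidx r) : a i1 = b i1 -> swp i1 a b = a.
Proof. move=> h; apply/ffunP=> j; rewrite !swpE; by case: eqP => // ->. Qed.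
Lemma swp_col n (r : 'I_n -> nat) i1 (a b : Nidx r) : samecol i1 a b -> swp i1 a b = b.
Proof. move=> h; apply/ffunP=> j; rewrite !swpE; case: eqP => // /eqP; exact: h. Qed.

Lemma dl_eq n (r : 'I_n -> nat) (a : Nidx r) j :
  dl a j = (enum_rank a == j) :> nat.
Proof. by rewrite /dl mnm1E. Qed.

Definition adjc n (r : 'I_n -> nat) (i1 : 'I_n) (a b : Nidx r) :=
  dist a (swp i1 b a) = 1%N.

Lemma set_adj n (r : 'I_n -> nat) i1 (a d : Nidx r) :
  [set j | a j != swp i1 d a j] = [set j | (j != i1) && (a j != d j)].
Proof. apply/setP=> j; rewrite !inE swpE; by case: (j == i1); rewrite ?eqxx. Qed.

Lemma adjc_col n (r : 'I_n -> nat) i1 (a d x z : Nidx r) :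
  samecol i1 a x -> samecol i1 d z -> adjc i1 x z -> adjc i1 a d.
Proof.
move=> ha hd; rewrite /adjc /dist !set_adj.
suff -> : [set j | (j != i1) && (a j != d j)] = [set j | (j != i1) && (x j != z j)] by [].
apply/setP=> j; rewrite !inE; case: (eqVneq j i1) => //= h.
by rewrite ha // hd.
Qed.

Lemma adjc_dist n (r : 'I_n -> nat) i1 (a b : Nidx r) :
  adjc i1 a b -> a i1 != b i1 -> dist a b = 2%N.
Proof.
rewrite /adjc /dist set_adj => h hi.
have -> : [set j | a j != b j] = i1 |: [set j | (j != i1) && (a j != b j)].
  apply/setP=> j; rewrite !inE; case: (eqVneq j i1) => [->|] //=.
by rewrite cardsU1 h !inE eqxx.
Qed.

Lemma dist_adjc n (r : 'I_n -> nat) i1 (a b : Nidx r) :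
  dist a b = 2%N -> a i1 != b i1 -> adjc i1 a b.
Proof.
rewrite /adjc /dist set_adj => h hi.
move: h; have -> : [set j | a j != b j] = i1 |: [set j | (j != i1) && (a j != b j)].
  apply/setP=> j; rewrite !inE; case: (eqVneq j i1) => [->|] //=.
by rewrite cardsU1 !inE eqxx /= => -[].
Qed.

Lemma adjc_ncol n (r : 'I_n -> nat) i1 (a b : Nidx r) :
  adjc i1 a b -> ~ samecol i1 a b.
Proof.
rewrite /adjc /dist set_adj => h hs; move: h.
suff -> : [set j | (j != i1) && (a j != b j)] = set0 by rewrite cards0.
apply/setP=> j; rewrite !inE; case: (eqVneq j i1) => //= /hs ->; by rewrite eqxx.
Qed.

Lemma dist_swp n (r : 'I_n -> nat) i1 (a b : Nidx r) :
  dist (swp i1 a b) (swp i1 b a) = dist a b.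
Proof.
rewrite /dist; apply: eq_card => j; rewrite !inE !swpE.
by case: (j == i1); rewrite // eq_sym.
Qed.

Lemma samecol_swp n (r : 'I_n -> nat) i1 (a b : Nidx r) : samecol i1 (swp i1 a b) a.
Proof. by move=> j hj; rewrite swpE (negbTE hj). Qed.
Lemma samecol_sym n (r : 'I_n -> nat) i1 (a b : Nidx r) : samecol i1 a b -> samecol i1 b a.
Proof. by move=> h j hj; rewrite h. Qed.
Lemma samecol_trans n (r : 'I_n -> nat) i1 (a b c : Nidx r) :
  samecol i1 a b -> samecol i1 b c -> samecol i1 a c.
Proof. by move=> h1 h2 j hj; rewrite h1 // h2. Qed.
Lemma samecol_refl n (r : 'I_n -> nat) i1 (a : Nidx r) : samecol i1 a a.
Proof. by []. Qed.

Notation MN r := ('X_{1..#|Nidx r|}).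

Lemma rank_eq n (r : 'I_n -> nat) (a b : Nidx r) : (enum_rank a == enum_rank b) = (a == b).
Proof. exact: (inj_eq enum_rank_inj). Qed.

Lemma M_has n (r : 'I_n -> nat) (w : MN r) d :
  (0 < w (enum_rank d))%N -> exists w1, w = (w1 + dl d)%MM.
Proof.
move=> h; exists (w - dl d)%MM; apply/mnmP=> j; rewrite !mnmDE mnmBE dl_eq.
case: eqP => [<-|_]; [by rewrite subnK | by rewrite subn0 addn0].
Qed.

Lemma M_split n (r : 'I_n -> nat) (w0 m0 : MN r) p a :
  (w0 + dl p)%MM = (m0 + dl a)%MM -> p != a ->
  exists m1, m0 = (m1 + dl p)%MM /\ w0 = (m1 + dl a)%MM.
Proof.
move=> /mnmP e hpa.
have h : (0 < m0 (enum_rank p))%N.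
  move: (e (enum_rank p)); rewrite !mnmDE !dl_eq eqxx rank_eq eq_sym (negbTE hpa) /=; lia.
have [m1 hm1] := M_has h; exists m1; split => //.
apply/mnmP=> j; move: (e j); rewrite hm1 !mnmDE !dl_eq; lia.
Qed.

Lemma M_cancel n (r : 'I_n -> nat) (w0 m0 : MN r) p :
  (w0 + dl p)%MM = (m0 + dl p)%MM -> w0 = m0.
Proof. exact: addIm. Qed.

Definition step n (r : 'I_n -> nat) (i1 : 'I_n) (w w' : MN r) :=
  exists w0 a b, dist a b = 2%N /\ w = (w0 + dl a + dl b)%MM /\
    w' = (w0 + dl (swp i1 a b) + dl (swp i1 b a))%MM.

Inductive eqv n (r : 'I_n -> nat) (i1 : 'I_n) : MN r -> MN r -> Prop :=
| eqv_refl w : eqv i1 w w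
| eqv_cons w1 w2 w3 : step i1 w1 w2 -> eqv i1 w2 w3 -> eqv i1 w1 w3.

Lemma eqv_trans n (r : 'I_n -> nat) i1 (w1 w2 w3 : MN r) :
  eqv i1 w1 w2 -> eqv i1 w2 w3 -> eqv i1 w1 w3.
Proof. elim=> // x y z hs _ IH h; exact: eqv_cons hs (IH h). Qed.

Lemma step_sym n (r : 'I_n -> nat) i1 (w1 w2 : MN r) : step i1 w1 w2 -> step i1 w2 w1.
Proof.
case=> w0 [a] [b] [hd [-> ->]]; exists w0, (swp i1 a b), (swp i1 b a).
by rewrite dist_swp !swp_swp_l !swp_swp_r !swp_id.
Qed.

Lemma eqv_step n (r : 'I_n -> nat) i1 (w1 w2 : MN r) : step i1 w1 w2 -> eqv i1 w1 w2.
Proof. move=> h; apply: eqv_cons h (eqv_refl _ _). Qed.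

Lemma eqv_sym n (r : 'I_n -> nat) i1 (w1 w2 : MN r) : eqv i1 w1 w2 -> eqv i1 w2 w1.
Proof.
elim=> [w|x y z hs _ IH]; first exact: eqv_refl.
exact: eqv_trans IH (eqv_step (step_sym hs)).
Qed.

Lemma eqv_move n (r : 'I_n -> nat) i1 (w0 : MN r) p q :
  adjc i1 p q -> eqv i1 (w0 + dl p + dl q)%MM (w0 + dl (swp i1 p q) + dl (swp i1 q p))%MM.
Proof.
move=> h; case: (eqVneq (p i1) (q i1)) => e.
  by rewrite swp_same // swp_same //; apply: eqv_refl.
apply: eqv_step; exists w0, p, q; split; [exact: adjc_dist h e | by []].
Qed.

Definition occ n (r : 'I_n -> nat) (i1 : 'I_n) (w : MN r) z :=
  exists d, (0 < w (enum_rank d))%N /\ samecol i1 d z.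

Lemma occ_add n (r : 'I_n -> nat) i1 (w : MN r) a z :
  occ i1 (w + dl a)%MM z <-> occ i1 w z \/ samecol i1 a z.
Proof.
split.
  case=> d [hd hs]; move: hd; rewrite mnmDE dl_eq rank_eq.
  case: (eqVneq a d) => [->|_]; first by right.
  by rewrite addn0 => h; left; exists d.
case=> [[d [hd hs]]|hs].
  by exists d; split => //; rewrite mnmDE; lia.
by exists a; split => //; rewrite mnmDE dl_eq eqxx; lia.
Qed.

Lemma step_occ n (r : 'I_n -> nat) i1 (w w' : MN r) z :
  step i1 w w' -> occ i1 w z -> occ i1 w' z.
Proof.
case=> w0 [a] [b] [_ [-> ->]]; rewrite !occ_add.
case=> [[h|h]|h]; [by left; left | left; right | right].
  apply: samecol_trans h; exact: samecol_swp.
apply: samecol_trans h; exact: samecol_swp.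
Qed.

Lemma eqv_occ n (r : 'I_n -> nat) i1 (w w' : MN r) z :
  eqv i1 w w' -> occ i1 w z -> occ i1 w' z.
Proof. elim=> // x y u hs _ IH h; apply: IH; exact: step_occ hs h. Qed.

Inductive conn n (r : 'I_n -> nat) (i1 : 'I_n) (O : Nidx r -> Prop) : Nidx r -> Nidx r -> Prop :=
| conn_same x y : samecol i1 x y -> conn i1 O x y
| conn_step x z y : adjc i1 x z -> O z -> conn i1 O z y -> conn i1 O x y.

Lemma conn_l n (r : 'I_n -> nat) i1 O (x x' y : Nidx r) :
  samecol i1 x x' -> conn i1 O x' y -> conn i1 O x y.
Proof.
move=> hs hc; case: x' y / hc hs => [x0 y0 h|x0 z y0 ha hO hc] hs.
  apply: conn_same; exact: samecol_trans hs h.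
apply: conn_step hO hc; exact: adjc_col hs (samecol_refl z) ha.
Qed.

Lemma conn_mono n (r : 'I_n -> nat) i1 (O O' : Nidx r -> Prop) x y :
  (forall z, O z -> O' z) -> conn i1 O x y -> conn i1 O' x y.
Proof.
move=> hO; elim=> [x0 y0 h|x0 z y0 ha hz _ IH]; first exact: conn_same.
exact: conn_step ha (hO _ hz) IH.
Qed.

Lemma conn_trans n (r : 'I_n -> nat) i1 O (x y u : Nidx r) :
  conn i1 O x y -> conn i1 O y u -> conn i1 O x u.
Proof.
elim=> [x0 y0 h|x0 z y0 ha hz _ IH] hc; first exact: conn_l h hc.
exact: conn_step ha hz (IH hc).
Qed.

Ltac mnm_lia := apply/mnmP=> ?; rewrite !mnmDE; lia.

Lemma Sw n (r : 'I_n -> nat) i1 O (x y : Nidx r) : conn i1 O x y ->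
  forall W : MN r, (forall z, O z -> occ i1 W z) ->
  forall W0 a b, W = (W0 + dl a + dl b)%MM -> samecol i1 a x -> samecol i1 b y ->
  eqv i1 W (W0 + dl (swp i1 a b) + dl (swp i1 b a))%MM.
Proof.
elim=> [x0 y0 h|x0 z y0 ha hz _ IH] W hW W0 a b eW hax hby.
  have sab : samecol i1 a b := samecol_trans hax (samecol_trans h (samecol_sym hby)).
  rewrite swp_col // swp_col ?eW; last exact: samecol_sym.
  have -> : (W0 + dl b + dl a = W0 + dl a + dl b)%MM by mnm_lia.
  exact: eqv_refl.
have [d [hd hdz]] := hW z hz.
case: (classic (samecol i1 d b)) => hdb.
  have hab : adjc i1 a b.
    apply: adjc_col hax _ ha; exact: samecol_trans (samecol_sym hdb) hdz.
  rewrite eW; exact: eqv_move.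
have hda : d != a.
  apply/eqP=> e; apply: (adjc_ncol ha); rewrite e in hdz.
  exact: samecol_trans (samecol_sym hax) hdz.
have hdb' : d != b by apply/eqP=> e; apply: hdb; rewrite e.
have [W1 eW0] : exists W1, W0 = (W1 + dl d)%MM.
  apply: M_has; move: hd; rewrite eW !mnmDE !dl_eq !rank_eq eq_sym (negbTE hda).
  by rewrite eq_sym (negbTE hdb') !addn0.
have had : adjc i1 a d by apply: adjc_col hax hdz ha.
have e1 : eqv i1 W (W1 + dl (swp i1 a d) + dl (swp i1 d a) + dl b)%MM.
  have -> : W = (W1 + dl b + dl a + dl d)%MM by rewrite eW eW0; mnm_lia.
  apply: eqv_trans (eqv_move _ had) _.
  have -> : (W1 + dl b + dl (swp i1 a d) + dl (swp i1 d a) = W1 + dl (swp i1 a d) + dl (swp i1 d a) + dl b)%MM by mnm_lia.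
  exact: eqv_refl.
apply: (eqv_trans e1).
have e2 := IH (W1 + dl (swp i1 a d) + dl (swp i1 d a) + dl b)%MM
  (fun u hu => eqv_occ e1 (hW u hu)) (W1 + dl (swp i1 a d))%MM (swp i1 d a) b
  erefl (samecol_trans (samecol_swp _ _) hdz) hby.
apply: (eqv_trans e2); rewrite swp_swp_l swp_swp_r.
have had2 : adjc i1 (swp i1 a d) (swp i1 d b).
  exact: adjc_col (samecol_swp _ _) (samecol_swp _ _) had.
have -> : (W1 + dl (swp i1 a d) + dl (swp i1 d b) + dl (swp i1 b a) =
  (W1 + dl (swp i1 b a)) + dl (swp i1 a d) + dl (swp i1 d b))%MM by mnm_lia.
apply: eqv_trans (eqv_move _ had2) _.
rewrite swp_swp_l swp_swp_r swp_swp_l swp_swp_r swp_id eW0.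
have -> : (W1 + dl (swp i1 b a) + dl (swp i1 a b) + dl d = W1 + dl d + dl (swp i1 a b) + dl (swp i1 b a))%MM by mnm_lia.
exact: eqv_refl.
Qed.


Lemma dist_sym n (r : 'I_n -> nat) (a b : Nidx r) : dist a b = dist b a.
Proof. by rewrite /dist; apply: eq_card => j; rewrite !inE eq_sym. Qed.

Lemma track_a n (r : 'I_n -> nat) i1 (m0 : MN r) a b q :
  adjc i1 a b ->
  exists w0'' p'', (m0 + dl (swp i1 a b) + dl (swp i1 b a))%MM = (w0'' + dl p'')%MM /\
    p'' i1 = a i1 /\ conn i1 (occ i1 (m0 + dl a + dl b)%MM) a p'' /\
    eqv i1 (m0 + dl b + dl (swp i1 a q))%MM (w0'' + dl (swp i1 p'' q))%MM.
Proof.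
move=> hab; exists (m0 + dl (swp i1 a b))%MM, (swp i1 b a); split => //.
split; first by rewrite swpE eqxx.
split.
  apply: (conn_step hab).
    by apply/occ_add; right; exact: samecol_refl.
  apply: conn_same; exact: samecol_sym (samecol_swp _ _).
have h : adjc i1 (swp i1 a q) b by apply: adjc_col (samecol_swp _ _) (samecol_refl b) hab.
have -> : (m0 + dl b + dl (swp i1 a q) = m0 + dl (swp i1 a q) + dl b)%MM by mnm_lia.
apply: eqv_trans (eqv_move _ h) _.
rewrite swp_swp_l swp_swp_r swp_swp_l; exact: eqv_refl.
Qed.

Lemma track1 n (r : 'I_n -> nat) i1 (w1 w2 w0 : MN r) p q :
  step i1 w1 w2 -> w1 = (w0 + dl p)%MM ->
  exists w0'' p'', w2 = (w0'' + dl p'')%MM /\ p'' i1 = p i1 /\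
    conn i1 (occ i1 w1) p p'' /\
    eqv i1 (w0 + dl (swp i1 p q))%MM (w0'' + dl (swp i1 p'' q))%MM.
Proof.
case=> m0 [a] [b] [hd [e1 e2]] ew.
case: (eqVneq (a i1) (b i1)) => hi.
  exists w0, p; rewrite e2 (swp_same hi) swp_same -?e1; last by rewrite hi.
  split => //; split => //; split; [exact: conn_same | exact: eqv_refl].
have hab : adjc i1 a b by exact: dist_adjc.
have hba : adjc i1 b a by apply: dist_adjc; [by rewrite dist_sym | by rewrite eq_sym].
case: (eqVneq p a) => [epa|hpa].
  subst p; have ew0 : w0 = (m0 + dl b)%MM.
    apply: (@M_cancel _ _ _ _ a); rewrite -ew e1; mnm_lia.
  have [w0'' [p'' [h1 [h2 [h3 h4]]]]] := track_a m0 q hab.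
  by exists w0'', p''; rewrite e2 ew0 e1; split.
case: (eqVneq p b) => [epb|hpb].
  subst p; have ew0 : w0 = (m0 + dl a)%MM.
    apply: (@M_cancel _ _ _ _ b); rewrite -ew e1; mnm_lia.
  have [w0'' [p'' [h1 [h2 [h3 h4]]]]] := track_a m0 q hba.
  exists w0'', p''; rewrite e2 ew0 e1; split.
    by rewrite -h1; mnm_lia.
  split => //; split => //.
  by have -> : (m0 + dl a + dl b = m0 + dl b + dl a)%MM by mnm_lia.
have [m1 [hm1 hw0]] : exists m1, (m0 + dl a)%MM = (m1 + dl p)%MM /\ w0 = (m1 + dl b)%MM.
  by apply: M_split => //; rewrite -ew e1.
have [m2 [hm2 hm0]] : exists m2, m1 = (m2 + dl a)%MM /\ m0 = (m2 + dl p)%MM.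
  by apply: M_split; rewrite -?hm1 // eq_sym.
exists (m2 + dl (swp i1 a b) + dl (swp i1 b a))%MM, p; split.
  by rewrite e2 hm0; mnm_lia.
split => //; split; first exact: conn_same.
rewrite hw0 hm2.
have -> : (m2 + dl a + dl b + dl (swp i1 p q) = m2 + dl (swp i1 p q) + dl a + dl b)%MM by mnm_lia.
apply: eqv_trans (eqv_move _ hab) _.
have -> : (m2 + dl (swp i1 p q) + dl (swp i1 a b) + dl (swp i1 b a) =
   m2 + dl (swp i1 a b) + dl (swp i1 b a) + dl (swp i1 p q))%MM by mnm_lia.
exact: eqv_refl.
Qed.

Lemma track n (r : 'I_n -> nat) i1 (w w' : MN r) q : eqv i1 w w' ->
  forall w0 p, w = (w0 + dl p)%MM ->
  exists w0' p', w' = (w0' + dl p')%MM /\ p' i1 = p i1 /\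
    conn i1 (occ i1 w) p p' /\
    eqv i1 (w0 + dl (swp i1 p q))%MM (w0' + dl (swp i1 p' q))%MM.
Proof.
elim=> [x|x y z hs _ IH] w0 p ew.
  exists w0, p; split => //; split => //; split; [exact: conn_same | exact: eqv_refl].
have [w0'' [p'' [h1 [h2 [h3 h4]]]]] := track1 q hs ew.
have [w0' [p' [g1 [g2 [g3 g4]]]]] := IH _ _ h1.
exists w0', p'; split => //; split; first by rewrite g2.
split; last exact: eqv_trans h4 g4.
apply: conn_trans h3 (conn_mono _ g3) => u hu.
exact: eqv_occ (eqv_step (step_sym hs)) hu.
Qed.

Lemma keyK n (r : 'I_n -> nat) i1 (o o' : Nidx r) (m m' : MN r) :
  samecol i1 o o' -> eqv i1 (m + dl o)%MM (m' + dl o)%MM ->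
  eqv i1 (m + dl o')%MM (m' + dl o')%MM.
Proof.
move=> hoo he.
have [w0' [p' [e [hrow [hc he2]]]]] := track o' he erefl.
rewrite swp_col // in he2.
case: (eqVneq p' o) => [epo|hpo].
  subst p'; rewrite swp_col // in he2; by rewrite -(M_cancel (esym e)).
have [m'' [ew0 em']] : exists m'', w0' = (m'' + dl o)%MM /\ m' = (m'' + dl p')%MM.
  by apply: M_split; rewrite -?e // eq_sym.
have hs : swp i1 o' p' = o.
  apply/ffunP=> j; rewrite swpE; case: eqP => [->|/eqP hj]; first by rewrite hrow.
  by rewrite hoo.
have hW : forall z, occ i1 (m + dl o)%MM z -> occ i1 (m'' + dl o' + dl p')%MM z.
  move=> z hz; have := eqv_occ he hz; rewrite !occ_add em' !occ_add.
  case=> [[h|h]|h]; [by left; left | by right | left; right].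
  exact: samecol_trans (samecol_sym hoo) h.
have := Sw hc hW erefl (samecol_sym hoo) (samecol_refl p').
rewrite hs => h2.
apply: eqv_trans he2 _; rewrite ew0.
have -> : (m' + dl o' = m'' + dl o' + dl p')%MM by rewrite em'; mnm_lia.
exact: eqv_sym h2.
Qed.

Import GRing.Theory.
Local Open Scope ring_scope.

Definition pb (P : Prop) : bool := if excluded_middle_informative P then true else false.
Lemma pbP (P : Prop) : reflect P (pb P).
Proof. rewrite /pb; case: excluded_middle_informative => h; by constructor. Qed.
Lemma pb_eq (P Q : Prop) : (P <-> Q) -> pb P = pb Q.
Proof. by move=> h; apply/pbP/pbP; apply h. Qed.

Definition LL (F : fieldType) k (P : 'X_{1..k} -> bool) (g : {mpoly F[k]}) : F :=
  \sum_(m <- msupp g) g@_m * (P m)%:R.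

Lemma L_cover (F : fieldType) k P (g : {mpoly F[k]}) s :
  uniq s -> {subset msupp g <= s} -> LL P g = \sum_(m <- s) g@_m * (P m)%:R.
Proof.
move=> us hs; rewrite /LL [RHS](bigID (fun m => m \in msupp g)) /=.
rewrite [X in _ = _ + X]big1 ?addr0; last first.
  by move=> m /memN_msupp_eq0 ->; rewrite mul0r.
rewrite -[RHS]big_filter; apply: perm_big; apply: uniq_perm.
- exact: msupp_uniq.
- exact: filter_uniq.
by move=> m; rewrite mem_filter; case: (boolP (m \in msupp g)) => // /hs ->.
Qed.

Lemma L_add (F : fieldType) k P (g h : {mpoly F[k]}) : LL P (g + h) = LL P g + LL P h.
Proof.
set s := undup (msupp g ++ msupp h).
have us : uniq s by exact: undup_uniq.
rewrite (@L_cover _ _ _ g s) ?(@L_cover _ _ _ h s) ?(@L_cover _ _ _ (g + h) s) //.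
- by rewrite -big_split; apply: eq_bigr => m _; rewrite mcoeffD mulrDl.
- by move=> m /msuppD_le; rewrite mem_undup.
- by move=> m hm; rewrite mem_undup mem_cat hm orbT.
by move=> m hm; rewrite mem_undup mem_cat hm.
Qed.

Lemma L_scale (F : fieldType) k P c (g : {mpoly F[k]}) : LL P (c *: g) = c * LL P g.
Proof.
rewrite (@L_cover _ _ _ _ (msupp g)) ?msupp_uniq //; last exact: msuppZ_le.
by rewrite /LL mulr_sumr; apply: eq_bigr => m _; rewrite mcoeffZ mulrA.
Qed.

Lemma L0 (F : fieldType) k P : LL P (0 : {mpoly F[k]}) = 0.
Proof. by rewrite /LL msupp0 big_nil. Qed.

Lemma L_opp (F : fieldType) k P (g : {mpoly F[k]}) : LL P (- g) = - LL P g.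
Proof. by rewrite -scaleN1r L_scale mulN1r. Qed.

Lemma L_X (F : fieldType) k P (m : 'X_{1..k}) : LL P ('X_[m] : {mpoly F[k]}) = (P m)%:R.
Proof. by rewrite /LL msuppX big_seq1 mcoeffX eqxx mul1r. Qed.

Lemma L_sum (F : fieldType) k P I (s : seq I) (G : I -> {mpoly F[k]}) :
  LL P (\sum_(i <- s) G i) = \sum_(i <- s) LL P (G i).
Proof.
elim: s => [|x s IH]; first by rewrite !big_nil L0.
by rewrite !big_cons L_add IH.
Qed.

Lemma mul_X (F : fieldType) k (f : {mpoly F[k]}) mu :
  f * 'X_[mu] = \sum_(m <- msupp f) f@_m *: 'X_[m + mu].
Proof.
rewrite {1}(mpolyE f) mulr_suml; apply: eq_bigr => m _.
by rewrite -scalerAl mpolyXD.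
Qed.

Lemma L_mulX (F : fieldType) k P (f : {mpoly F[k]}) mu :
  LL P (f * 'X_[mu]) = \sum_(m <- msupp f) f@_m * (P (m + mu)%MM)%:R.
Proof.
by rewrite mul_X L_sum; apply: eq_bigr => m _; rewrite L_scale L_X.
Qed.

Lemma in_I0 (F : fieldType) n (r : 'I_n -> nat) i1 : @in_I F n r i1 0.
Proof. by exists [::]; split => //; rewrite big_nil. Qed.

Lemma in_I_add (F : fieldType) n (r : 'I_n -> nat) i1 (g h : PR F r) :
  in_I i1 g -> in_I i1 h -> in_I i1 (g + h).
Proof.
case=> s1 [h1 ->] [s2 [h2 ->]]; exists (s1 ++ s2); split; last by rewrite big_cat.
by move=> p; rewrite mem_cat => /orP [/h1|/h2].
Qed.

Lemma in_I_mul (F : fieldType) n (r : 'I_n -> nat) i1 (c g : PR F r) :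
  in_I i1 g -> in_I i1 (c * g).
Proof.
case=> s [hs ->]; exists [seq (c * p.1, p.2) | p <- s]; split.
  by move=> p /mapP [q hq ->] /=; apply: hs.
by rewrite big_map mulr_sumr; apply: eq_bigr => p _; rewrite mulrA.
Qed.

Lemma in_I_sum (F : fieldType) n (r : 'I_n -> nat) (i1 : 'I_n) (I : eqType) (s : seq I) (G : I -> PR F r) :
  (forall i, i \in s -> in_I i1 (G i)) -> in_I i1 (\sum_(i <- s) G i).
Proof.
elim: s => [|x s IH] h; first by rewrite big_nil; apply: in_I0.
rewrite big_cons; apply: in_I_add; first by apply: h; rewrite inE eqxx.
by apply: IH => i hi; apply: h; rewrite inE hi orbT.
Qed.

Lemma fgenE (F : fieldType) n (r : 'I_n -> nat) i1 (a b : Nidx r) :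
  fgen F i1 a b = 'X_[dl a + dl b] - 'X_[dl (swp i1 a b) + dl (swp i1 b a)].
Proof. by rewrite /fgen /xv !mpolyXD. Qed.

Lemma eqv_in_I (F : fieldType) n (r : 'I_n -> nat) i1 (w w' : MN r) :
  eqv i1 w w' -> @in_I F n r i1 ('X_[w] - 'X_[w']).
Proof.
elim=> [x|x y z hs _ IH]; first by rewrite subrr; apply: in_I0.
have -> : ('X_[x] - 'X_[z] : PR F r) = ('X_[x] - 'X_[y]) + ('X_[y] - 'X_[z]).
  by rewrite addrA subrK.
apply: in_I_add => //.
case: hs => w0 [a] [b] [hd [-> ->]].
rewrite -!addmA !mpolyXD -mulrBr -!mpolyXD -fgenE.
apply: in_I_mul; exists [:: (1, fgen F i1 a b)]; split.
  by move=> p; rewrite inE => /eqP -> /=; exists a, b.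
by rewrite big_seq1 mul1r.
Qed.

Definition cls n (r : 'I_n -> nat) i1 (mu : MN r) : MN r -> bool :=
  fun m => pb (eqv i1 m mu).

Lemma in_I_L (F : fieldType) n (r : 'I_n -> nat) i1 (g : PR F r) :
  in_I i1 g -> forall mu, LL (cls i1 mu) g = 0.
Proof.
case=> s [hs ->] mu; rewrite L_sum big_seq big1 // => p /hs [a [b [hd ->]]].
rewrite fgenE mulrBr L_add L_opp !L_mulX -sumrB big1 // => m _.
rewrite -mulrBr.
suff -> : cls i1 mu (m + (dl a + dl b))%MM = cls i1 mu (m + (dl (swp i1 a b) + dl (swp i1 b a)))%MM.
  by rewrite subrr mulr0.
have hst : eqv i1 (m + (dl a + dl b))%MM (m + (dl (swp i1 a b) + dl (swp i1 b a)))%MM.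
  by apply: eqv_step; exists m, a, b; rewrite !addmA.
apply: pb_eq; split => h.
  exact: eqv_trans (eqv_sym hst) h.
exact: eqv_trans hst h.
Qed.

Lemma ex_rep n (r : 'I_n -> nat) i1 (mu : MN r) : exists m, cls i1 mu m.
Proof. by exists mu; apply/pbP; apply: eqv_refl. Qed.

Definition rep n (r : 'I_n -> nat) i1 (mu : MN r) : MN r := xchoose (ex_rep i1 mu).

Lemma rep_eqv n (r : 'I_n -> nat) i1 (mu : MN r) : eqv i1 (rep i1 mu) mu.
Proof. exact/pbP/(xchooseP (ex_rep i1 mu)). Qed.

Lemma rep_eq n (r : 'I_n -> nat) i1 (mu nu : MN r) : eqv i1 mu nu -> rep i1 mu = rep i1 nu.
Proof.
move=> h; apply: eq_xchoose => m; apply: pb_eq; split => h'.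
  exact: eqv_trans h' h.
exact: eqv_trans h' (eqv_sym h).
Qed.

Lemma L_in_I (F : fieldType) n (r : 'I_n -> nat) i1 (g : PR F r) :
  (forall mu, LL (cls i1 mu) g = 0) -> in_I i1 g.
Proof.
move=> hL.
have H0 : \sum_(m <- msupp g) g@_m *: 'X_[rep i1 m] = 0 :> PR F r.
  apply/mpolyP => nu; rewrite mcoeff0 raddf_sum /=.
  under eq_bigr do rewrite mcoeffZ mcoeffX.
  have rm : forall m, rep i1 m = nu -> eqv i1 m nu.
    by move=> m <-; apply: eqv_sym; apply: rep_eqv.
  case: (eqVneq (rep i1 nu) nu) => hnu.
    rewrite -[RHS](hL nu) /LL; apply: eq_bigr => m _; congr (_ * _%:R).
    rewrite /cls; case: pbP => h.
      by rewrite (rep_eq h) hnu eqxx.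
    by case: eqP => // e; case: h; apply: rm.
  rewrite big1 // => m _; case: eqP => [h|_]; last by rewrite mulr0.
  by move: hnu; rewrite -(rep_eq (rm _ h)) h eqxx.
have eg : g = \sum_(m <- msupp g) g@_m *: ('X_[m] - 'X_[rep i1 m]).
  rewrite {1}(mpolyE g) -[RHS]addr0 -[X in _ = _ + X]H0 -big_split /=; apply: eq_bigr => m _.
  by rewrite -scalerDr subrK.
rewrite eg; apply: in_I_sum => m _.
rewrite -mul_mpolyC; apply: in_I_mul; apply: eqv_in_I.
exact: eqv_sym (rep_eqv _ _).
Qed.

Lemma dir (F : fieldType) n (r : 'I_n -> nat) i1 (o o' : Nidx r) (f : PR F r) :
  samecol i1 o o' -> in_I i1 (f * 'X_[dl o]) -> in_I i1 (f * 'X_[dl o']).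
Proof.
move=> hoo /in_I_L hL; apply: L_in_I => nu; rewrite L_mulX.
case: (classic (exists m0, eqv i1 (m0 + dl o')%MM nu)) => [[m0 hm0]|hno].
  rewrite -[RHS](hL (m0 + dl o)%MM) L_mulX; apply: eq_bigr => m _; congr (_ * _%:R).
  rewrite /cls; apply: congr1; apply: pb_eq; split => h.
    apply: (keyK (samecol_sym hoo)); exact: eqv_trans h (eqv_sym hm0).
  apply: eqv_trans _ hm0; exact: keyK hoo h.
rewrite big1 // => m _; rewrite /cls; case: pbP => [h|_]; last by rewrite mulr0.
by case: hno; exists m.
Qed.


Theorem lemma4p15 (F : fieldType) (n : nat) (r : 'I_n -> nat)
  (hn : (3 <= n)%N) (hr : forall j, (0 < r j)%N)
  (i1 : 'I_n) (hi1 : nat_of_ord i1 = 0%N)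
  (o o' : Nidx r) (hoo' : forall j : 'I_n, j != i1 -> o j = o' j) :
  forall f : PR F r, @in_colon F n r i1 (xv F o) f <-> @in_colon F n r i1 (xv F o') f.
Proof.
move=> f; rewrite /in_colon; split => h.
  exact: (dir (o := o) hoo' h).
exact: (dir (o := o') (samecol_sym hoo') h).
Qed.
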